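(* Let $A\in\mathbb{R}^{n\times n}$, $\bm{u},\bm{v},\bm{g}\in\mathbb{R}^n$ with $\bm{g}-A\bm{u}\ne0$ and $\bm{v}\ne0$. Perform $m$ Arnoldi steps for $A$ with starting vector $\bm{g}-A\bm{u}$, giving $V_m^{(\psi)},\bm{v}_{m+1}^{(\psi)},H_m^{(\psi)},h_{m+1,m}^{(\psi)}\ge0$ with $AV_m^{(\psi)}=V_m^{(\psi)}H_m^{(\psi)}+h^{(\psi)}_{m+1,m}\bm{v}^{(\psi)}_{m+1}\bm{e}_m^T$, and $m$ Arnoldi steps for $A$ with starting vector $\bm{v}$, giving $V_m^{(\sigma)},\bm{v}_{m+1}^{(\sigma)},H_m^{(\sigma)},h_{m+1,m}^{(\sigma)}\ge0$ analogously. Let $u^{(\psi)}$ solve $u''=-H_m^{(\psi)}u+\|\bm{g}-A\bm{u}\|\bm{e}_1$, $u(0)=u'(0)=0$, and $u^{(\sigma)}$ solve $u''=-H_m^{(\sigma)}u$, $u(0)=0$, $u'(0)=\|\bm{v}\|\bm{e}_1$, and set $\bm{y}_m(t)=\bm{u}+V_m^{(\psi)}u^{(\psi)}(t)+V_m^{(\sigma)}u^{(\sigma)}(t)$ and $\bm{r}_m(t)=-A\bm{y}_m(t)+\bm{g}-\bm{y}_m''(t)$. Then for all $t\ge0$, $$\|\bm{r}_m(t)\|\le h^{(\psi)}_{m+1,m}\,t\varphi(-t\hat\omega^{(\psi)})\|\bm{g}-A\bm{u}\|+h^{(\sigma)}_{m+1,m}\,t\varphi(-t\hat\omega^{(\sigma)})\|\bm{v}\|\le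 t\varphi(-t\hat\omega)\big(h^{(\psi)}_{m+1,m}\|\bm{g}-A\bm{u}\|+h^{(\sigma)}_{m+1,m}\|\bm{v}\|\big),$$ where $\hat\omega^{(\psi)}=-\tfrac12\|H_m^{(\psi)}-I\|$, $\hat\omega^{(\sigma)}=-\tfrac12\|H_m^{(\sigma)}-I\|$, $\hat\omega=\min\{\hat\omega^{(\psi)},\hat\omega^{(\sigma)}\}$. In particular, for every $\varepsilon>0$ there is $\delta>0$ with $\|\bm{r}_m(t)\|\le\varepsilon$ for $t\in[0,\delta]$.
   Context: $\varphi(z)=(e^z-1)/z$ with $\varphi(0)=1$. The Arnoldi process with $m$ steps for $A$ and a nonzero starting vector $\bm{w}$ yields $V_m$ with orthonormal columns, first column $\bm{w}/\|\bm{w}\|$, a unit vector $\bm{v}_{m+1}$ orthogonal to the columns of $V_m$, $H_m=V_m^TAV_m$ (upper Hessenberg) and $h_{m+1,m}\ge0$ with $AV_m=V_mH_m+h_{m+1,m}\bm{v}_{m+1}\bm{e}_m^T$. $\|\cdot\|$ is the Euclidean / spectral norm, $\bm{e}_j$ canonical unit vectors. *)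

(* Defs.v *)
From HB Require Import structures.
From mathcomp Require Import all_boot all_order all_algebra.
From mathcomp Require Import all_classical all_reals all_analysis.
Set Implicit Arguments. Unset Strict Implicit. Unset Printing Implicit Defensive.
Import Order.TTheory GRing.Theory Num.Theory.
Local Open Scope ring_scope.
Local Open Scope classical_set_scope.

(* Euclidean norm of a column vector (NOT mathcomp-analysis' max-norm `|x|). *)
Definition enorm {R : realType} {n : nat} (x : 'cV[R]_n) : R :=
  Num.sqrt (\sum_(i < n) x i ord0 ^+ 2).

Definition snorm {R : realType} {p q : nat} (M : 'M[R]_(p, q)) : R :=
  sup [set enorm (M *m x) | x in [set x : 'cV[R]_q | enorm x = 1]].

Definition phi {R : realType} (z : R) : R :=
  if z == 0 then 1 else (expR z - 1) / z.

Definition evec {R : realType} {k : nat} (j : 'I_k) : 'cV[R]_k :=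
  \col_(i < k) (if i == j then 1 else 0).

Definition arnoldi_output {R : realType} {n k : nat} (A : 'M[R]_n)
  (w : 'cV[R]_n) (V : 'M[R]_(n, k.+1)) (vnext : 'cV[R]_n)
  (H : 'M[R]_k.+1) (h : R) : Prop :=
  V^T *m V = 1%:M /\
  col ord0 V = (enorm w)^-1 *: w /\
  enorm vnext = 1 /\
  V^T *m vnext = 0 /\
  H = V^T *m A *m V /\
  (forall i j : 'I_k.+1, (j.+1 < i)%N -> H i j = 0) /\
  0 <= h /\
  A *m V = V *m H + h *: (vnext *m (evec (@ord_max k))^T).

Definition ode2_sol {R : realType} {k : nat} (H : 'M[R]_k.+1) (c : R)
  (u0 u1 : 'cV[R]_k.+1) (u : R -> 'cV[R]_k.+1) : Prop :=
  [/\ forall t : R, derivable u t 1,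
      forall t : R, derivable (derive1 u) t 1,
      forall t : R, derive1 (derive1 u) t = - (H *m u t) + c *: evec ord0,
      u 0 = u0 &
      derive1 u 0 = u1].

(* Main.v *)
Require Import Defs.
From HB Require Import structures.
From mathcomp Require Import all_boot all_order all_algebra.
From mathcomp Require Import all_classical all_reals all_analysis.
From mathcomp Require Import ring lra.
Import Order.TTheory GRing.Theory Num.Theory.
Local Open Scope ring_scope.
Set Implicit Arguments. Unset Strict Implicit.
Section Vec.
Variable R : realType.
Variable k : nat.
Implicit Types x y z : 'cV[R]_k.

Definition dot x y : R := \sum_(i < k) x i ord0 * y i ord0.

Lemma dot_ge0 x : 0 <= dot x x.
Proof. by apply: sumr_ge0 => i _; rewrite -expr2 sqr_ge0. Qed.

Lemma enormE x : enorm x = Num.sqrt (dot x x).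
Proof. by rewrite /enorm /dot; under eq_bigr do rewrite expr2. Qed.

Lemma enorm_ge0 x : 0 <= enorm x.
Proof. by rewrite enormE sqrtr_ge0. Qed.

Lemma enorm_sq x : enorm x ^+ 2 = dot x x.
Proof. by rewrite enormE sqr_sqrtr// dot_ge0. Qed.

Lemma dotC x y : dot x y = dot y x.
Proof. by apply: eq_bigr => i _; rewrite mulrC. Qed.

Lemma dotDl x y z : dot (x + y) z = dot x z + dot y z.
Proof. by rewrite /dot -big_split; apply: eq_bigr => i _; rewrite mxE mulrDl. Qed.

Lemma dotZl c x y : dot (c *: x) y = c * dot x y.
Proof. by rewrite /dot mulr_sumr; apply: eq_bigr => i _; rewrite mxE mulrA. Qed.

Lemma dotNl x y : dot (- x) y = - dot x y.
Proof. by rewrite -scaleN1r dotZl mulN1r. Qed.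

Lemma dot0 x : dot x x = 0 -> x = 0.
Proof.
move=> h; apply/matrixP => i j; rewrite (ord1 j) mxE.
have /psumr_eq0P H : \sum_(i < k) x i ord0 * x i ord0 = 0 by [].
have := H (fun l _ => ltac:(by rewrite -expr2 sqr_ge0)) i isT.
by rewrite -expr2 => /eqP; rewrite sqrf_eq0 => /eqP.
Qed.

Lemma comp_le x i : `|x i ord0| <= enorm x.
Proof.
rewrite enormE -(sqrtr_sqr (x i ord0)) ler_wsqrtr//.
rewrite /dot (bigD1 i)//= expr2 lerDl; apply: sumr_ge0 => l _.
by rewrite -expr2 sqr_ge0.
Qed.

Lemma CS_aux x y : dot x y <= enorm x * enorm y.
Proof.
have [->|x0] := eqVneq x 0.
  by rewrite /dot big1 ?mulr_ge0 ?enorm_ge0// => i _; rewrite mxE mul0r.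
have [->|y0] := eqVneq y 0.
  by rewrite /dot big1 ?mulr_ge0 ?enorm_ge0// => i _; rewrite mxE mulr0.
have ax : 0 < enorm x.
  rewrite lt_def enorm_ge0 andbT; apply/eqP => /eqP.
  rewrite enormE sqrtr_eq0 => h; apply/(negP x0)/eqP/dot0.
  by apply/eqP; rewrite eq_le h dot_ge0.
have ay : 0 < enorm y.
  rewrite lt_def enorm_ge0 andbT; apply/eqP => /eqP.
  rewrite enormE sqrtr_eq0 => h; apply/(negP y0)/eqP/dot0.
  by apply/eqP; rewrite eq_le h dot_ge0.
set a := enorm x in ax *; set b := enorm y in ay *.
have key : 2 * dot x y <= b / a * dot x x + a / b * dot y y.
  rewrite /dot mulr_sumr !mulr_sumr -big_split /=; apply: ler_sum => i _.
  set p := x i ord0; set q := y i ord0.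
  have hab : 0 < a * b by rewrite mulr_gt0.
  rewrite -(ler_pM2r hab).
  have -> : (b / a * (p * p) + a / b * (q * q)) * (a * b) = b * b * (p * p) + a * a * (q * q).
    by field; rewrite ?gt_eqF.
  have : 0 <= (b * p - a * q) ^+ 2 by rewrite sqr_ge0.
  by move=> H; nra.
rewrite -!enorm_sq -/a -/b in key.
have e : b / a * a ^+ 2 + a / b * b ^+ 2 = 2 * (a * b).
  by field; rewrite ?gt_eqF.
by rewrite e ler_pM2l in key.
Qed.

Lemma CS x y : `|dot x y| <= enorm x * enorm y.
Proof.
rewrite ler_norml CS_aux andbT lerNl -dotNl.
apply: le_trans (CS_aux _ _) _.
by rewrite -scaleN1r !enormE dotZl dotC dotZl !mulN1r opprK.
Qed.

Lemma enormZ c x : enorm (c *: x) = `|c| * enorm x.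
Proof.
rewrite !enormE dotZl dotC dotZl mulrA -expr2 sqrtrM ?sqr_ge0//.
by rewrite sqrtr_sqr.
Qed.

Lemma enormN x : enorm (- x) = enorm x.
Proof. by rewrite -scaleN1r enormZ normrN normr1 mul1r. Qed.

Lemma enormD x y : enorm (x + y) <= enorm x + enorm y.
Proof.
rewrite [X in X <= _]enormE -(@ger0_norm _ (enorm x + enorm y)) ?addr_ge0 ?enorm_ge0//.
rewrite -sqrtr_sqr ler_wsqrtr//.
rewrite dotDl (dotC x) (dotC y) !dotDl (dotC x y).
rewrite sqrrD -!enorm_sq.
rewrite (dotC y x) mulr2n; have := CS_aux x y; lra.
Qed.

Lemma enorm_evec0 (kk : nat) : enorm (evec (@ord0 kk) : 'cV[R]_kk.+1) = 1.
Proof.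
rewrite /enorm (bigD1 ord0)//= big1 ?addr0.
  by rewrite !mxE eqxx expr1n sqrtr1.
by move=> i /negbTE hi; rewrite !mxE hi expr0n.
Qed.

End Vec.
Section Snorm.
Variable R : realType.

Lemma enorm0 k : enorm (0 : 'cV[R]_k) = 0.
Proof. by rewrite /enorm big1 ?sqrtr0// => i _; rewrite mxE expr0n. Qed.

Lemma enorm_gt0 k (x : 'cV[R]_k) : x != 0 -> 0 < enorm x.
Proof.
move=> x0; rewrite lt_def enorm_ge0 andbT; apply/eqP => /eqP.
rewrite enormE sqrtr_eq0 => h; apply/(negP x0)/eqP/dot0.
by apply/eqP; rewrite eq_le h dot_ge0.
Qed.

Lemma mx_bound p q (M : 'M[R]_(p, q)) (x : 'cV[R]_q) :
  enorm (M *m x) <= Num.sqrt (\sum_(i < p) enorm (row i M)^T ^+ 2) * enorm x.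
Proof.
rewrite -(@ger0_norm _ (enorm x)) ?enorm_ge0// -sqrtr_sqr -sqrtrM; last first.
  by apply: sumr_ge0 => i _; rewrite sqr_ge0.
rewrite enormE ler_wsqrtr// mulr_suml /dot; apply: ler_sum => i _.
rewrite -expr2 -exprMn.
have -> : (M *m x) i ord0 = dot (row i M)^T x.
  by rewrite mxE /dot; apply: eq_bigr => j _; rewrite !mxE.
rewrite -real_normK ?num_real// -[X in _ <= X]real_normK ?num_real//.
rewrite lerXn2r ?nnegrE ?normr_ge0//.
by rewrite (le_trans (CS _ _)) // ger0_norm ?mulr_ge0 ?enorm_ge0.
Qed.


Lemma snorm_ub p q (M : 'M[R]_(p, q)) (x : 'cV[R]_q) :
  enorm x = 1 -> enorm (M *m x) <= snorm M.
Proof.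
move=> hx; apply: ub_le_sup; last by exists x.
exists (Num.sqrt (\sum_(i < p) enorm (row i M)^T ^+ 2)) => _ [y /= hy <-].
by rewrite (le_trans (mx_bound _ _)) // hy mulr1.
Qed.

Lemma snorm_ge0 p q (M : 'M[R]_(p, q.+1)) : 0 <= snorm M.
Proof.
apply: le_trans (snorm_ub M (enorm_evec0 R q)).
exact: enorm_ge0.
Qed.

Lemma snorm_bound p q (M : 'M[R]_(p, q)) (x : 'cV[R]_q) :
  enorm (M *m x) <= snorm M * enorm x.
Proof.
have [->|x0] := eqVneq x 0.
  by rewrite mulmx0 !enorm0 mulr0.
have e0 := enorm_gt0 x0.
have hx : enorm ((enorm x)^-1 *: x) = 1.
  by rewrite enormZ ger0_norm ?invr_ge0 ?enorm_ge0// mulVf ?gt_eqF.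
have := snorm_ub M hx; rewrite -scalemxAr enormZ ger0_norm ?invr_ge0 ?enorm_ge0//.
by rewrite ler_pdivrMl // mulrC.
Qed.

End Snorm.
Section Calc.
Variable R : realType.

Lemma isdD (f g : R -> R) (x df dg : R) : is_derive x 1 f df -> is_derive x 1 g dg ->
  is_derive x 1 (fun s => f s + g s) (df + dg).
Proof. move=> hf hg; exact: is_deriveD. Qed.

Lemma isdN (f : R -> R) (x df : R) : is_derive x 1 f df ->
  is_derive x 1 (fun s => - f s) (- df).
Proof. move=> hf; exact: is_deriveN. Qed.

Lemma isdM (f g : R -> R) (x df dg : R) : is_derive x 1 f df -> is_derive x 1 g dg ->
  is_derive x 1 (fun s => f s * g s) (f x * dg + g x * df).
Proof. move=> hf hg; exact: is_deriveM. Qed.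

Lemma isdC (c x : R) : is_derive x 1 (fun _ : R => c) 0.
Proof. exact: is_derive_cst. Qed.

Lemma isdsum n (h : 'I_n -> R -> R) (x : R) (dh : 'I_n -> R) : (forall i, is_derive x 1 (h i) (dh i)) ->
  is_derive x 1 (fun s => \sum_(i < n) h i s) (\sum_(i < n) dh i).
Proof.
move=> H; have := is_derive_sum H.
by rewrite (_ : \sum_(i < n) h i = fun s => \sum_(i < n) h i s)// funeqE => s; rewrite fct_sumE.
Qed.

Lemma isd_comp p q (F : R -> 'M[R]_(p, q)) (t : R) i j : derivable F t 1 ->
  is_derive t 1 (fun s => F s i j) (derive1 F t i j).
Proof.
move=> dF; have := (derivable_mxP F t 1).1 dF i j => dij.
rewrite derive1E derive_mx // mxE; exact: derivableP.
Qed.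

Lemma mx_derive p q (F : R -> 'M[R]_(p, q)) (t : R) (G : 'M[R]_(p, q)) :
  (forall i j, is_derive t 1 (fun s => F s i j) (G i j)) ->
  derivable F t 1 /\ derive1 F t = G.
Proof.
move=> H.
have dF : derivable F t 1 by apply/derivable_mxP => i j; case: (H i j).
split => //; rewrite derive1E derive_mx //; apply/matrixP => i j.
by rewrite mxE; apply: derive_val.
Qed.

Lemma lin_derive n k (c : 'cV[R]_n) (P Q : 'M[R]_(n, k)) (f g : R -> 'cV[R]_k) :
  (forall t, derivable f t 1) -> (forall t, derivable g t 1) ->
  (forall t, derivable (fun s => c + P *m f s + Q *m g s) t 1) /\
  derive1 (fun s => c + P *m f s + Q *m g s) = fun s => P *m derive1 f s + Q *m derive1 g s.
Proof.
move=> df dg.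
have H t : derivable (fun s => c + P *m f s + Q *m g s) t 1 /\
   derive1 (fun s => c + P *m f s + Q *m g s) t = P *m derive1 f t + Q *m derive1 g t.
  apply: mx_derive => i j.
  have -> : (fun s => (c + P *m f s + Q *m g s) i j) =
     (fun s => c i j + (\sum_(l < k) (fun s => P i l * f s l j) s
                       + \sum_(l < k) (fun s => Q i l * g s l j) s)).
    by apply/funext => s; rewrite !mxE addrA.
  rewrite !mxE -[X in is_derive _ _ _ X]add0r.
  apply: (isdD (f := fun _ => c i j)).
  apply: (isdD (f := fun s => \sum_(l < k) (fun s => P i l * f s l j) s)); apply: isdsum => l.
    have := isdM (isdC (P i l) t) (isd_comp l j (df t)).
    by rewrite mulr0 addr0.
  have := isdM (isdC (Q i l) t) (isd_comp l j (dg t)).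
  by rewrite mulr0 addr0.
by split => [t|]; [case: (H t)|apply/funext => t; case: (H t)].
Qed.

End Calc.
Section Resid.
Variable R : realType.

Lemma mul_evec p q (M : 'M[R]_(p, q)) (j : 'I_q) : M *m evec j = col j M.
Proof.
apply/matrixP => i l; rewrite !mxE (bigD1 j)//= big1 ?addr0.
  by rewrite !mxE eqxx mulr1.
by move=> i' /negbTE h; rewrite !mxE h mulr0.
Qed.

Lemma evecT_mul q (a : 'cV[R]_q) (j : 'I_q) : (evec j)^T *m a = (a j ord0)%:M.
Proof.
apply/matrixP => i l; rewrite (ord1 i) (ord1 l) !mxE (bigD1 j)//= big1 ?addr0.
  by rewrite !mxE eqxx mul1r.
by move=> i' /negbTE h; rewrite !mxE h mul0r.
Qed.

Lemma residual n m (A : 'M[R]_n) (u v g : 'cV[R]_n)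
  (Vpsi : 'M[R]_(n, m.+1)) (vpsi : 'cV[R]_n) (Hpsi : 'M[R]_m.+1) (hpsi : R)
  (Vsig : 'M[R]_(n, m.+1)) (vsig : 'cV[R]_n) (Hsig : 'M[R]_m.+1) (hsig : R)
  (upsi usig : R -> 'cV[R]_m.+1) :
  g - A *m u != 0 ->
  arnoldi_output A (g - A *m u) Vpsi vpsi Hpsi hpsi ->
  arnoldi_output A v Vsig vsig Hsig hsig ->
  ode2_sol Hpsi (enorm (g - A *m u)) 0 0 upsi ->
  ode2_sol Hsig 0 0 (enorm v *: evec ord0) usig ->
  let y := fun t : R => u + Vpsi *m upsi t + Vsig *m usig t in
  forall t, - (A *m y t) + g - derive1 (derive1 y) t =
    - ((hpsi * upsi t ord_max ord0) *: vpsi) - (hsig * usig t ord_max ord0) *: vsig.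
Proof.
move=> w0 [_ [c1 [_ [_ [_ [_ [_ Apsi]]]]]]] [_ [_ [_ [_ [_ [_ [_ Asig]]]]]]]
  [dp ddp odep _ _] [ds dds odes _ _] y t.
have [_ e1] := lin_derive u Vpsi Vsig dp ds.
have e1' : derive1 y = fun s => 0 + Vpsi *m derive1 upsi s + Vsig *m derive1 usig s.
  by rewrite /y e1; apply/funext => s; rewrite add0r.
have [_ e2] := lin_derive 0 Vpsi Vsig ddp dds.
rewrite e1' e2 odep odes scale0r addr0 -/y.
rewrite /y !mulmxDr !mulmxA Apsi Asig !mulmxDl -!scalemxAl -!mulmxA !evecT_mul.
rewrite !mul_mx_scalar mulmxN -scalemxAr mul_evec c1 !scalerA mulfV; last first.
  by rewrite gt_eqF// enorm_gt0.
rewrite scale1r mulmxN.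
move: (A *m u) (Vpsi *m (Hpsi *m upsi t)) (Vsig *m (Hsig *m usig t)) => X Y Z.
move: (hpsi * upsi t ord_max ord0) (hsig * usig t ord_max ord0) => a b.
apply/matrixP => i j; rewrite !mxE; ring.
Qed.

End Resid.
Section Ode.
Variable R : realType.

Definition bfun (mu s : R) : R := if mu == 0 then s else (expR (mu * s) - 1) / mu.

Lemma bfunE mu s : bfun mu s = s * phi (mu * s).
Proof.
rewrite /bfun /phi; have [->|mu0] := eqVneq mu 0; first by rewrite mul0r eqxx mulr1.
have [->|s0] := eqVneq s 0; first by rewrite mulr0 eqxx expR0 subrr mul0r mul0r.
by rewrite mulf_eq0 (negbTE mu0) (negbTE s0) /=; field; rewrite s0 mu0.
Qed.

Lemma bfun_mu mu s : mu * bfun mu s = expR (mu * s) - 1.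
Proof.
rewrite /bfun; have [->|mu0] := eqVneq mu 0; first by rewrite !mul0r expR0 subrr.
by field; rewrite mu0.
Qed.

Lemma isd_lin (mu x : R) : is_derive x 1 (fun s : R => mu * s) mu.
Proof.
have := isdM (isdC mu x) (is_derive_id x (1 : R)).
by rewrite mulr0 addr0 mulr1.
Qed.

Lemma isd_exp (mu x : R) : is_derive x 1 (fun s : R => expR (mu * s)) (mu * expR (mu * x)).
Proof.
have := is_derive1_comp (is_derive_expR (mu * x)) (isd_lin mu x).
by rewrite mulrC.
Qed.

Lemma isd_bfun (mu x : R) : is_derive x 1 (bfun mu) (expR (mu * x)).
Proof.
rewrite /bfun; have [->|mu0] := eqVneq mu 0.
  by rewrite mul0r expR0; exact: is_derive_id.
have := isdM (isd_exp mu x) (isdC mu^-1 x).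
rewrite mulr0 add0r mulrA mulVf // mul1r => h.
have := isdD h (isdC (- mu^-1) x); rewrite addr0.
by rewrite (_ : (fun s => (expR (mu * s) - 1) / mu) = (fun s => expR (mu * s) / mu + - mu^-1))//;
  apply/funext => s; rewrite mulrBl mul1r.
Qed.

End Ode.
Section Cmp.
Variable R : realType.

Lemma cmp0 (F dF : R -> R) : (forall x : R, is_derive x 1 F (dF x)) ->
  (forall x, 0 < x -> dF x <= 0) -> forall t, 0 <= t -> F t <= F 0.
Proof.
move=> hF hd t t0.
have der (x : R) : derivable F x 1 by case: (hF x).
apply: (@ler0_derive1_le_cc R F 0 t) => //.
- move=> x; rewrite in_itv /= => /andP[x0 _].
  rewrite derive1E derive_val; exact: hd.
- by apply: derivable_within_continuous => x _; exact: der.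
- by rewrite in_itv /= lexx t0.
- by rewrite in_itv /= lexx t0.
Qed.

End Cmp.
Section Energy.
Variable R : realType.

Lemma cmp1 (F : R -> R) : (forall x : R, derivable F x 1) ->
  (forall x : R, 0 < x -> derive1 F x <= 0) -> forall t, 0 <= t -> F t <= F 0.
Proof.
move=> hF hd; apply: (@cmp0 R F (derive1 F)) => // x.
by rewrite derive1E; apply: derivableP.
Qed.

Lemma dot_evec k (j : 'I_k) (x : 'cV[R]_k) : dot (evec j) x = x j ord0.
Proof.
rewrite /dot (bigD1 j)//= big1 ?addr0; first by rewrite mxE eqxx mul1r.
by move=> i /negbTE h; rewrite mxE h mul0r.
Qed.

Lemma energy_deriv k (H : 'M[R]_k.+1) (c : R) u0 u1 (u : R -> 'cV[R]_k.+1) :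
  0 <= c -> ode2_sol H c u0 u1 u ->
  let mu := snorm (H - 1%:M) / 2 in
  let E := fun s => dot (u s) (u s) + dot (derive1 u s) (derive1 u s) in
  forall s : R, exists DE, is_derive s 1 E DE /\ DE <= 2 * (mu * E s + c * Num.sqrt (E s)).
Proof.
move=> c0 [du ddu ode _ _] mu E s.
exists (2 * (dot (u s) (derive1 u s) + dot (derive1 u s) (derive1 (derive1 u) s))); split.
  apply: is_derive_eq.
    apply: isdD; apply: isdsum => i; apply: isdM; apply: isd_comp; [exact: du|exact: du|exact: ddu|exact: ddu].
  rewrite /dot mulrDr !mulr_sumr; congr (_ + _); apply: eq_bigr => i _; ring.
have mu0 : 0 <= mu by rewrite divr_ge0 ?snorm_ge0.
set a := enorm (u s); set b := enorm (derive1 u s).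
have a0 : 0 <= a by exact: enorm_ge0.
have b0 : 0 <= b by exact: enorm_ge0.
have Ee : E s = a ^+ 2 + b ^+ 2 by rewrite /E !enorm_sq.
have bE : b <= Num.sqrt (E s).
  rewrite /b enormE ler_wsqrtr // /E lerDr; exact: dot_ge0.
rewrite ode (dotC (derive1 u s)) dotDl dotNl dotZl dot_evec.
have e1 : dot (u s) (derive1 u s) + (- dot (H *m u s) (derive1 u s)) =
    - dot ((H - 1%:M) *m u s) (derive1 u s).
  by rewrite mulmxBl mul1mx dotDl dotNl; ring.
have hc : `|dot ((H - 1%:M) *m u s) (derive1 u s)| <= 2 * mu * a * b.
  apply: le_trans (CS _ _) _.
  have m2 : 2 * mu = snorm (H - 1%:M) by rewrite /mu mulrC divfK ?pnatr_eq0.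
  by rewrite -/b ler_wpM2r // m2 (le_trans (snorm_bound _ _)).
have hu' : c * derive1 u s ord0 ord0 <= c * b.
  rewrite ler_wpM2l //; apply: le_trans (comp_le _ _); exact: ler_norm.
move: hc; rewrite ler_norml => /andP[hc1 hc2].
have : 2 * mu * a * b <= mu * (a ^+ 2 + b ^+ 2).
  have : 0 <= mu * (a - b) ^+ 2 by rewrite mulr_ge0 ?sqr_ge0.
  by move=> h; nra.
rewrite -Ee => hab.
have : c * b <= c * Num.sqrt (E s) by rewrite ler_wpM2l.
lra.
Qed.

End Energy.
Section Energy2.
Variable R : realType.

Lemma energy k (H : 'M[R]_k.+1) (c : R) u0 u1 (u : R -> 'cV[R]_k.+1) :
  0 <= c -> ode2_sol H c u0 u1 u ->
  let mu := snorm (H - 1%:M) / 2 in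
  forall t : R, 0 <= t ->
  Num.sqrt (dot (u t) (u t) + dot (derive1 u t) (derive1 u t)) <=
  Num.sqrt (dot u0 u0 + dot u1 u1) * expR (mu * t) + c * bfun mu t.
Proof.
move=> c0 hode mu t t0.
have hE := energy_deriv c0 hode.
case: hode => [_ _ _ hu0 hu1].
pose E' := fun s => dot (u s) (u s) + dot (derive1 u s) (derive1 u s).
have mu0 : 0 <= mu by rewrite divr_ge0 ?snorm_ge0.
have Ege0 s : 0 <= E' s by rewrite addr_ge0 ?dot_ge0.
have E0 : E' 0 = dot u0 u0 + dot u1 u1 by rewrite /E' hu0 hu1.
have emt0 : 0 < expR (mu * t) by exact: expR_gt0.
suff key : forall eps, 0 < eps ->
    Num.sqrt (E' t) <= (Num.sqrt (E' 0) + eps) * expR (mu * t) + c * bfun mu t.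
  rewrite -E0; apply/ler_addgt0Pr => e e0.
  have := key (e / expR (mu * t)) (divr_gt0 e0 emt0).
  by rewrite mulrDl divfK ?gt_eqF //; lra.
move=> eps eps0.
pose N := fun s => Num.sqrt (E' s + eps ^+ 2).
pose T := fun s => N 0 * expR (mu * s) + c * bfun mu s.
pose F := fun s => (N s + - T s) * expR (- mu * s).
have Npos s : 0 < E' s + eps ^+ 2 by rewrite ltr_wpDl ?exprn_gt0.
have hF : forall x : R, derivable F x 1 /\ (0 < x -> derive1 F x <= 0).
  move=> x; have [DE [hDE bDE]] := hE x.
  have dN := @is_derive1_comp R Num.sqrt (fun s => E' s + eps ^+ 2) x _ _ (is_derive1_sqrt (Npos x)) (isdD hDE (isdC (eps ^+ 2) x)).
  have dT := isdD (isdM (isdC (N 0) x) (isd_exp mu x)) (isdM (isdC c x) (isd_bfun mu x)).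
  have dF := isdM (isdD dN (isdN dT)) (isd_exp (- mu) x).
  split; first by case: dF.
  move=> x0; rewrite derive1E derive_val /=.
  rewrite -/(N x) addr0 !mulr0 !addr0.
  have hb := bfun_mu mu x.
  set ex := expR (mu * x) in hb *; set en := expR (- mu * x).
  have en0 : 0 < en by exact: expR_gt0.
  have eex : en * ex = 1 by rewrite /en /ex mulNr mulrC expRxMexpNx_1.
  set S := N x; set b := bfun mu x.
  have S0 : 0 < S by rewrite /S /N sqrtr_gt0.
  have SS : S ^+ 2 = E' x + eps ^+ 2 by rewrite /S /N sqr_sqrtr // ltW.
  have sE : Num.sqrt (E' x) <= S by rewrite /S /N ler_wsqrtr // lerDl sqr_ge0.
  have sE0 : 0 <= Num.sqrt (E' x) by exact: sqrtr_ge0.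
  have bDE' : DE <= 2 * (mu * E' x + c * Num.sqrt (E' x)) by [].
  have hdn : (2 * S)^-1 * DE <= mu * S + c.
    rewrite ler_pdivrMl ?mulr_gt0 //.
    apply: le_trans bDE' _.
    have : mu * E' x <= mu * S ^+ 2 by rewrite ler_wpM2l // SS lerDl sqr_ge0.
    have : c * Num.sqrt (E' x) <= c * S by rewrite ler_wpM2l.
    move=> h1 h2; rewrite (_ : 2 * S * (mu * S + c) = 2 * (mu * S ^+ 2 + c * S)); last by ring.
    rewrite ler_pM2l //; lra.
  have h1 : en * ((2 * S)^-1 * DE) <= en * (mu * S + c) by rewrite ler_wpM2l // ltW.
  have h2 : en * c * (mu * b) = en * c * (ex - 1) by rewrite hb.
  set dv := (2 * S)^-1 * DE in hdn h1 *.
  nra.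
have Ft := cmp1 (fun x => (hF x).1) (fun x x0 => (hF x).2 x0) t0.
have F0 : F 0 = 0.
  by rewrite /F /T bfunE !mulr0 mul0r expR0; ring.
rewrite F0 /F in Ft.
have ent : 0 < expR (- mu * t) by exact: expR_gt0.
have NT : N t <= T t by nra.
have sE : Num.sqrt (E' t) <= N t by rewrite /N ler_wsqrtr // lerDl sqr_ge0.
have N0 : N 0 <= Num.sqrt (E' 0) + eps.
  have s0 : 0 <= Num.sqrt (E' 0) by exact: sqrtr_ge0.
  have hle : E' 0 + eps ^+ 2 <= (Num.sqrt (E' 0) + eps) ^+ 2.
    rewrite sqrrD sqr_sqrtr //.
    have : 0 <= Num.sqrt (E' 0) * eps by rewrite mulr_ge0 // ltW.
    rewrite mulr2n; lra.
  have := ler_wsqrtr hle; rewrite sqrtr_sqr ger0_norm //.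
  by rewrite addr_ge0 // ltW.
have : N 0 * expR (mu * t) <= (Num.sqrt (E' 0) + eps) * expR (mu * t).
  by rewrite ler_wpM2r // ltW.
rewrite /T in NT; lra.
Qed.

End Energy2.
Section Bfun.
Variable R : realType.

Lemma bfun0 (mu : R) : bfun mu 0 = 0.
Proof. by rewrite bfunE mul0r. Qed.

Lemma bfun_mono_mu (mu mu' t : R) : mu <= mu' -> 0 <= t -> bfun mu t <= bfun mu' t.
Proof.
move=> hm t0.
have := @cmp0 R (fun s => bfun mu s + - bfun mu' s)
  (fun s => expR (mu * s) + - expR (mu' * s))
  (fun x => isdD (isd_bfun mu x) (isdN (isd_bfun mu' x))).
move=> /(_ _ t t0); rewrite !bfun0 subrr subr_le0; apply.
by move=> x x0; rewrite subr_le0 ler_expR ler_pM2r.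
Qed.

Lemma bfun_ge0 (mu t : R) : 0 <= t -> 0 <= bfun mu t.
Proof.
move=> t0.
have := @cmp0 R (fun s => - bfun mu s) (fun s => - expR (mu * s))
  (fun x => isdN (isd_bfun mu x)).
move=> /(_ _ t t0); rewrite !bfun0 oppr0 oppr_le0; apply.
by move=> x x0; rewrite oppr_le0 ltW // expR_gt0.
Qed.

Lemma bfun_le (mu t : R) : 0 <= mu -> 0 <= t -> bfun mu t <= t * expR (mu * t).
Proof.
move=> m0 t0.
have h x := isdD (isd_bfun mu x) (isdN (isdM (is_derive_id x (1 : R)) (isd_exp mu x))).
have := @cmp0 R (fun s => bfun mu s + - (s * expR (mu * s))) _ h.
move=> /(_ _ t t0); rewrite !bfun0 mul0r subrr subr_le0; apply.
move=> x x0 /=; rewrite mulr1.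
have : 0 <= x * (mu * expR (mu * x)) by rewrite !mulr_ge0 // ?ltW // expR_gt0.
lra.
Qed.

End Bfun.
Section Bounds.
Variable R : realType.

Lemma dot0l k (x : 'cV[R]_k) : dot 0 x = 0.
Proof. by rewrite /dot big1 // => i _; rewrite mxE mul0r. Qed.

Lemma psi_bound k (H : 'M[R]_k.+1) (c : R) (u : R -> 'cV[R]_k.+1) (j : 'I_k.+1) :
  0 <= c -> ode2_sol H c 0 0 u -> forall t : R, 0 <= t ->
  `|u t j ord0| <= c * bfun (snorm (H - 1%:M) / 2) t.
Proof.
move=> c0 hode t t0.
have h := @energy R k H c 0 0 u c0 hode t t0.
rewrite !dot0l addr0 sqrtr0 mul0r add0r in h.
apply: le_trans h; apply: le_trans (comp_le _ _) _.
rewrite enormE ler_wsqrtr // lerDl; exact: dot_ge0.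
Qed.

Lemma sig_bound k (H : 'M[R]_k.+1) (w : R) (u : R -> 'cV[R]_k.+1) (j : 'I_k.+1) :
  0 <= w -> ode2_sol H 0 0 (w *: evec ord0) u -> forall t : R, 0 <= t ->
  `|u t j ord0| <= w * bfun (snorm (H - 1%:M) / 2) t.
Proof.
move=> w0 hode t t0.
set mu := snorm (H - 1%:M) / 2.
have hd s : 0 < s -> `|derive1 u s j ord0| <= w * expR (mu * s).
  move=> s0; have h := @energy R k H 0 0 (w *: evec ord0) u (lexx 0) hode s (ltW s0).
  rewrite dot0l add0r mul0r addr0 -(enorm_sq (w *: evec ord0)) enormZ enorm_evec0 mulr1 ger0_norm //
    sqrtr_sqr ger0_norm // in h.
  apply: le_trans h; apply: le_trans (comp_le _ _) _.
  rewrite enormE ler_wsqrtr // lerDr; exact: dot_ge0.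
case: (hode) => du _ _ hu0 _.
have u0 : u 0 j ord0 = 0 by rewrite hu0 mxE.
have G1 x := isdD (isd_comp j ord0 (du x)) (isdN (isdM (isdC w x) (isd_bfun mu x))).
have G2 x := isdD (isdN (isd_comp j ord0 (du x))) (isdN (isdM (isdC w x) (isd_bfun mu x))).
have hd1 : forall x : R, 0 < x ->
    derive1 u x j ord0 + - (w * expR (mu * x) + bfun mu x * 0) <= 0.
  move=> x x0; have := hd x x0; rewrite ler_norml => /andP[a b].
  rewrite mulr0 addr0; lra.
have hd2 : forall x : R, 0 < x ->
    - derive1 u x j ord0 + - (w * expR (mu * x) + bfun mu x * 0) <= 0.
  move=> x x0; have := hd x x0; rewrite ler_norml => /andP[a b].
  rewrite mulr0 addr0; lra.
have h1 := @cmp0 R _ _ G1 hd1 t t0.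
have h2 := @cmp0 R _ _ G2 hd2 t t0.
rewrite /= u0 bfun0 mulr0 in h1 h2.
rewrite ler_norml; apply/andP; split; lra.
Qed.

End Bounds.
Unset Implicit Arguments.
Set Strict Implicit.
Theorem proposition2p2 (R : realType) (n m : nat) (A : 'M[R]_n)
  (u v g : 'cV[R]_n)
  (Vpsi : 'M[R]_(n, m.+1)) (vpsi : 'cV[R]_n) (Hpsi : 'M[R]_m.+1) (hpsi : R)
  (Vsig : 'M[R]_(n, m.+1)) (vsig : 'cV[R]_n) (Hsig : 'M[R]_m.+1) (hsig : R)
  (upsi usig : R -> 'cV[R]_m.+1) :
  g - A *m u != 0 ->
  v != 0 ->
  arnoldi_output A (g - A *m u) Vpsi vpsi Hpsi hpsi ->
  arnoldi_output A v Vsig vsig Hsig hsig ->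
  ode2_sol Hpsi (enorm (g - A *m u)) 0 0 upsi ->
  ode2_sol Hsig 0 0 (enorm v *: evec ord0) usig ->
  let y := fun t : R => u + Vpsi *m upsi t + Vsig *m usig t in
  let r := fun t : R => - (A *m y t) + g - derive1 (derive1 y) t in
  let om_psi := - (snorm (Hpsi - 1%:M)) / 2 in
  let om_sig := - (snorm (Hsig - 1%:M)) / 2 in
  let om := Num.min om_psi om_sig in
  (forall t : R, 0 <= t ->
     enorm (r t) <= hpsi * (t * phi (- t * om_psi)) * enorm (g - A *m u)
                    + hsig * (t * phi (- t * om_sig)) * enorm v
     /\ hpsi * (t * phi (- t * om_psi)) * enorm (g - A *m u)
          + hsig * (t * phi (- t * om_sig)) * enorm v
        <= t * phi (- t * om) * (hpsi * enorm (g - A *m u) + hsig * enorm v))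
  /\ (forall eps : R, 0 < eps -> exists delta : R, 0 < delta /\
        forall t : R, 0 <= t <= delta -> enorm (r t) <= eps).
Proof.
move=> w0 v0 Ap As Op Os y r om_psi om_sig om.
have hres := residual w0 Ap As Op Os.
have [_ [_ [nvp [_ [_ [_ [hp0 _]]]]]]] := Ap.
have [_ [_ [nvs [_ [_ [_ [hs0 _]]]]]]] := As.
set beta := enorm (g - A *m u) in Op hres *.
set nv := enorm v in Os *.
have beta0 : 0 <= beta by exact: enorm_ge0.
have nv0 : 0 <= nv by exact: enorm_ge0.
set mp := snorm (Hpsi - 1%:M) / 2.
set ms := snorm (Hsig - 1%:M) / 2.
set mo := - om.
have ep t : t * phi (- t * om_psi) = bfun mp t.
  by rewrite bfunE /om_psi /mp; congr (t * phi _); ring.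
have es t : t * phi (- t * om_sig) = bfun ms t.
  by rewrite bfunE /om_sig /ms; congr (t * phi _); ring.
have eo t : t * phi (- t * om) = bfun mo t.
  by rewrite bfunE /mo; congr (t * phi _); ring.
have mpo : mp <= mo.
  rewrite /mo lerNr /om ge_min; apply/orP; left.
  by rewrite /om_psi /mp le_eqVlt; apply/orP; left; apply/eqP; ring.
have mso : ms <= mo.
  rewrite /mo lerNr /om ge_min; apply/orP; right.
  by rewrite /om_sig /ms le_eqVlt; apply/orP; left; apply/eqP; ring.
have mp0 : 0 <= mp by rewrite divr_ge0 ?snorm_ge0.
have mo0 : 0 <= mo by apply: le_trans mpo.
have Bp t : 0 <= t -> `|upsi t ord_max ord0| <= beta * bfun mp t.
  exact: psi_bound beta0 Op t.
have Bs t : 0 <= t -> `|usig t ord_max ord0| <= nv * bfun ms t.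
  exact: sig_bound nv0 Os t.
have hr t : enorm (r t) <= hpsi * `|upsi t ord_max ord0| + hsig * `|usig t ord_max ord0|.
  rewrite /r /y hres; apply: le_trans (enormD _ _) _.
  by rewrite !enormN !enormZ nvp nvs !mulr1 !normrM (ger0_norm hp0) (ger0_norm hs0).
have P1 t : 0 <= t ->
     enorm (r t) <= hpsi * (t * phi (- t * om_psi)) * beta
                    + hsig * (t * phi (- t * om_sig)) * nv
     /\ hpsi * (t * phi (- t * om_psi)) * beta
          + hsig * (t * phi (- t * om_sig)) * nv
        <= t * phi (- t * om) * (hpsi * beta + hsig * nv).
  move=> t0; rewrite ep es eo; split.
    apply: le_trans (hr t) _.
    have h1 : hpsi * `|upsi t ord_max ord0| <= hpsi * (beta * bfun mp t) by rewrite ler_wpM2l // Bp.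
    have h2 : hsig * `|usig t ord_max ord0| <= hsig * (nv * bfun ms t) by rewrite ler_wpM2l // Bs.
    lra.
  have h1 : 0 <= hpsi * beta * (bfun mo t - bfun mp t).
    by rewrite !mulr_ge0 // subr_ge0 bfun_mono_mu.
  have h2 : 0 <= hsig * nv * (bfun mo t - bfun ms t).
    by rewrite !mulr_ge0 // subr_ge0 bfun_mono_mu.
  lra.
split => // eps eps0.
set K := hpsi * beta + hsig * nv.
have K0 : 0 <= K by rewrite addr_ge0 // mulr_ge0.
have eK : 0 < K * expR mo + 1 by rewrite ltr_wpDl // mulr_ge0 // ltW // expR_gt0.
exists (Num.min 1 (eps / (K * expR mo + 1))); split.
  by rewrite lt_min ltr01 divr_gt0.
move=> t /andP[t0]; rewrite le_min => /andP[t1 te].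
have [h _] := P1 t t0.
have [_ h'] := P1 t t0.
apply: (le_trans h); apply: (le_trans h'); rewrite eo -/K.
have hb : bfun mo t <= t * expR mo.
  apply: le_trans (bfun_le mo0 t0) _; rewrite ler_wpM2l // ler_expR.
  by rewrite -{2}(mulr1 mo) ler_wpM2l.
have hb' : t * expR mo <= eps / (K * expR mo + 1) * expR mo by rewrite ler_wpM2r // ltW // expR_gt0.
have : bfun mo t * K <= eps / (K * expR mo + 1) * expR mo * K.
  by rewrite ler_wpM2r // (le_trans hb hb').
move=> h3; apply: le_trans h3 _.
have q : K * expR mo / (K * expR mo + 1) <= 1.
  have e1 : 1 - K * expR mo / (K * expR mo + 1) = (K * expR mo + 1)^-1.
    by field; rewrite gt_eqF.
  have : 0 <= (K * expR mo + 1)^-1 by rewrite invr_ge0 ltW.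
  lra.
have -> : eps / (K * expR mo + 1) * expR mo * K = eps * (K * expR mo / (K * expR mo + 1)).
  by ring.
nra.
Qed.
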